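(* For every configuration $\mathcal{C}$ of $d$ doors, $\mathrm{Price}(\mathcal{C})\le d$, where $\mathrm{Price}(\mathcal{C})=\mathbb{T}_{\mathcal{C}}\big/\sum_{i=1}^d E_i$.
   Context: Dependent doors model. Fix an integer $d\ge 2$ and doors $1,\dots,d$, all initially closed; once a door opens it stays open forever. A configuration $\mathcal{C}$ specifies for each door $i$ a function $\phi_i^{\mathcal{C}}$ mapping every finite nonempty sequence $(X_1,\dots,X_n)$ of subsets of $\{1,\dots,i-1\}$ to $[0,1]$: $\phi_i^{\mathcal{C}}(X_1,\dots,X_n)$ is the probability that door $i$ has opened during $n$ knocks on it, where $X_j$ is the set of open doors among $\{1,\dots,i-1\}$ at the time of the $j$-th knock on door $i$ (so a closed door $i$ opens at its $n$-th knock with conditional probability $(\phi_i(X_1..X_n)-\phi_i(X_1..X_{n-1}))/(1-\phi_i(X_1..X_{n-1}))$, with $\phi_i$ of the empty sequence equal to $0$). Configurations are assumed monotone ($\phi_i(X')\le\phi_i(X)$ whenever $X'$ is a, not necessarily consecutive, subsequence of $X$) and positively correlated ($\phi_i(X'_1,\dots,X'_n)\le\phi_i(X_1,\dots,X_n)$ whenever $X'_j\subseteq X_j$ for all $j$). The fundamental distribution of door $i$ is $p_i(n)=1-\phi_i(\{1,\dots,i-1\}^n)$ ($p_i(0)=1$), and $E_i=\sum_{n\ge0}p_i(n)$ is assumed finite. A knock sequence $\pi$ is an infinite sequence of door indices, executed in order without any feedback; $\mathbb{T}_{\mathcal{C}}(\pi)$ is the expected number of knocks until all $d$ doors are open, and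 $\mathbb{T}_{\mathcal{C}}=\inf_\pi \mathbb{T}_{\mathcal{C}}(\pi)$. *)

(* Defs.v *)
From HB Require Import structures.
From mathcomp Require Import all_boot all_order all_algebra.
From mathcomp Require Import all_classical all_reals ereal topology normedtype sequences.

Set Implicit Arguments. Unset Strict Implicit. Unset Printing Implicit Defensive.
Import Order.TTheory GRing.Theory Num.Theory.
Local Open Scope ring_scope.

Section Doors.
Variables (R : realType) (d : nat).

(* Doors are 0-indexed: door i : 'I_d ; its "lower" doors are the j < i. *)
Definition preds (i : 'I_d) : {set 'I_d} := [set j : 'I_d | (j < i)%N].

Definition valid (i : 'I_d) (s : seq {set 'I_d}) : bool :=
  all (fun X : {set 'I_d} => X \subset preds i) s.

(* A (monotone, positively correlated) configuration. [phi i s] is meaningful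
   only for nonempty valid [s]. *)
Record config := Config {
  phi : 'I_d -> seq {set 'I_d} -> R;
  phi_range : forall i s, valid i s -> s != [::] -> 0 <= phi i s <= 1;
  phi_mono : forall i s s', valid i s -> valid i s' -> s' != [::] ->
     subseq s' s -> phi i s' <= phi i s;
  phi_poscorr : forall i s s', valid i s -> valid i s' -> s' != [::] ->
     size s' = size s -> all2 (fun a b : {set 'I_d} => a \subset b) s' s -> phi i s' <= phi i s
}.

Variable C : config.

Definition Phi (i : 'I_d) (s : seq {set 'I_d}) : R :=
  if s is [::] then 0 else phi C i s.

Definition pfund (i : 'I_d) (n : nat) : R := 1 - Phi i (nseq n (preds i)).

Definition Efund (i : 'I_d) : \bar R := (\sum_(0 <= n <oo) (pfund i n)%:E)%E.

(* Knock sequence: pi k is the door knocked at the (k+1)-th knock (k = 0,1,..).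
   A trajectory is S : nat -> {set 'I_d}, S k = set of open doors before knock k
   (i.e. after k knocks). *)

(* the sets X_1..X_n seen by door i at its knocks strictly before time k *)
Definition hist (pi : nat -> 'I_d) (S : nat -> {set 'I_d}) (i : 'I_d) (k : nat)
  : seq {set 'I_d} :=
  [seq S j :&: preds i | j <- iota 0 k & pi j == i].

Definition trans (pi : nat -> 'I_d) (S : nat -> {set 'I_d}) (k : nat) : R :=
  let i := pi k in
  if i \in S k then (if S k.+1 == S k then 1 else 0)
  else
    let h := hist pi S i k in
    let q := (Phi i (rcons h (S k :&: preds i)) - Phi i h) / (1 - Phi i h) in
    if S k.+1 == S k :|: [set i] then q
    else if S k.+1 == S k then 1 - q else 0.

Definition path_prob (pi : nat -> 'I_d) (t : nat) (S : {ffun 'I_t.+1 -> {set 'I_d}}) : R :=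
  let S' := fun j : nat => S (inord j) in
  (if S' 0%N == finset.set0 then 1 else 0) * \prod_(k < t) trans pi S' k.

Definition tail_prob (pi : nat -> 'I_d) (t : nat) : R :=
  \sum_(S : {ffun 'I_t.+1 -> {set 'I_d}} | S ord_max != [set: 'I_d]) path_prob pi S.

(* expected number of knocks until all doors are open: E[tau] = sum_t P(tau > t) *)
Definition Tpi (pi : nat -> 'I_d) : \bar R := (\sum_(0 <= t <oo) (tail_prob pi t)%:E)%E.

Definition Topt : \bar R := ereal_inf (range Tpi).

Definition SumE : \bar R := (\sum_(i < d) Efund i)%E.
Definition Price : \bar R := (Topt * ((fine SumE)^-1)%:E)%E.

End Doors.

(* Main.v *)
Require Import Defs.
From HB Require Import structures.
From mathcomp Require Import all_boot all_order all_algebra.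
From mathcomp Require Import all_classical all_reals ereal topology normedtype sequences.
From mathcomp Require Import ring lra zify.
Import Order.TTheory GRing.Theory Num.Theory.
Local Open Scope ring_scope.

Module P1.
Local Open Scope ring_scope.
Set Implicit Arguments. Unset Strict Implicit. Unset Printing Implicit Defensive.

Section Basic.
Variables (R : realType) (d : nat) (C : config R d).
Local Notation T := {set 'I_d}.
Implicit Types (i : 'I_d) (pi : nat -> 'I_d).

Lemma valid_cat i s1 s2 : valid i (s1 ++ s2) = valid i s1 && valid i s2.
Proof. by rewrite /valid all_cat. Qed.

Lemma valid_rcons i s x : valid i (rcons s x) = valid i s && (x \subset preds i).
Proof. by rewrite /valid all_rcons andbC. Qed.

Lemma valid_nseq i n : valid i (nseq n (preds i)).
Proof. by rewrite /valid all_nseq subxx orbT. Qed.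

Lemma Phi_range i s : valid i s -> 0 <= Phi C i s <= 1.
Proof.
case: s => [|x s] v /=; first by rewrite lexx ler01.
exact: (phi_range C).
Qed.

Lemma Phi_ge0 i s : valid i s -> 0 <= Phi C i s.
Proof. by move/Phi_range/andP=> []. Qed.

Lemma Phi_le1 i s : valid i s -> Phi C i s <= 1.
Proof. by move/Phi_range/andP=> []. Qed.

Lemma Phi_mono i s s' : valid i s -> valid i s' -> subseq s' s -> Phi C i s' <= Phi C i s.
Proof.
case: s' => [|x' s'] v v' sub; first exact: Phi_ge0.
case: s sub v => [|x s] sub v; first by rewrite subseq0 in sub.
exact: (phi_mono C).
Qed.

Definition upd (s : nat -> T) n x := fun j => if j == n then x else s j.

Lemma hist_ext pi s s' i k : (forall j, (j < k)%N -> s j = s' j) ->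
  hist pi s i k = hist pi s' i k.
Proof.
move=> e; rewrite /hist; apply/eq_in_map => j.
by rewrite mem_filter mem_iota add0n => /andP[_ /andP[_ jk]]; rewrite e.
Qed.

Lemma hist_S pi s i k : hist pi s i k.+1 =
  if pi k == i then rcons (hist pi s i k) (s k :&: preds i) else hist pi s i k.
Proof.
rewrite /hist -addn1 iotaD filter_cat map_cat /= add0n.
by case: eqP => _ /=; rewrite ?cats1 ?cats0.
Qed.

Lemma valid_hist pi s i k : valid i (hist pi s i k).
Proof. by rewrite /valid all_map; apply/allP => j _ /=; exact: subsetIr. Qed.

Lemma q_range i h (y : T) : valid i h -> y \subset preds i ->
  0 <= (Phi C i (rcons h y) - Phi C i h) / (1 - Phi C i h) <= 1.
Proof.
move=> vh vy.
have vh' : valid i (rcons h y) by rewrite valid_rcons vh vy.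
have P0 := Phi_ge0 vh; have P1 := Phi_le1 vh; have P'1 := Phi_le1 vh'.
have PP : Phi C i h <= Phi C i (rcons h y).
  apply: Phi_mono => //; exact: subseq_rcons.
have [e|ne] := eqVneq (Phi C i h) 1.
  by rewrite e subrr invr0 mulr0 lexx ler01.
have pos : 0 < 1 - Phi C i h by rewrite subr_gt0 lt_neqAle ne P1.
apply/andP; split; first by apply: divr_ge0; rewrite subr_ge0.
by rewrite ler_pdivrMr // mul1r lerD2r.
Qed.

Lemma trans_ge0 pi s k : 0 <= trans C pi s k.
Proof.
rewrite /trans.
have /andP[q0 q1] := q_range (valid_hist pi s (pi k) k) (subsetIr (s k) (preds (pi k))).
case: ifP => _; first by case: ifP.
case: ifP => _ //; case: ifP => _ //; by rewrite subr_ge0.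
Qed.

Lemma trans_ext pi s s' k : (forall j, (j <= k.+1)%N -> s j = s' j) ->
  trans C pi s k = trans C pi s' k.
Proof.
move=> e; rewrite /trans (@hist_ext pi s s'); last by move=> j jk; apply: e; lia.
by rewrite (e k) // (e k.+1).
Qed.

Definition w pi (t : nat) (s : nat -> T) : R :=
  (if s 0%N == finset.set0 then 1 else 0) * \prod_(k < t) trans C pi s k.

Lemma w_ge0 pi t s : 0 <= w pi t s.
Proof.
apply: mulr_ge0; first by case: ifP.
by apply: prodr_ge0 => k _; exact: trans_ge0.
Qed.

Lemma w_S pi t s : w pi t.+1 s = w pi t s * trans C pi s t.
Proof. by rewrite /w big_ord_recr /= mulrA. Qed.

Lemma w_ext pi t s s' : (forall j, (j <= t)%N -> s j = s' j) -> w pi t s = w pi t s'.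
Proof.
move=> e; rewrite /w (e 0%N) //; congr (_ * _); apply: eq_bigr => j _.
by apply: trans_ext => l lj; apply: e; have := ltn_ord j; lia.
Qed.

Definition sf t (S : {ffun 'I_t.+1 -> T}) : nat -> T := fun j => S (inord j).

Definition Ex pi t (G : (nat -> T) -> R) : R :=
  \sum_(S : {ffun 'I_t.+1 -> T}) w pi t (@sf t S) * G (@sf t S).

Lemma path_probE pi t (S : {ffun 'I_t.+1 -> T}) : path_prob C pi S = w pi t (sf S).
Proof. by []. Qed.

Definition ext t (S : {ffun 'I_t.+1 -> T}) (x : T) : {ffun 'I_t.+2 -> T} :=
  [ffun j : 'I_t.+2 => if (j < t.+1)%N then S (inord j) else x].

Definition unext t (S2 : {ffun 'I_t.+2 -> T}) : {ffun 'I_t.+1 -> T} * T :=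
  ([ffun j : 'I_t.+1 => S2 (inord j)], S2 ord_max).

Lemma sum_ffunS t (F : {ffun 'I_t.+2 -> T} -> R) :
  \sum_(S2 : {ffun 'I_t.+2 -> T}) F S2 =
  \sum_(S : {ffun 'I_t.+1 -> T}) \sum_(x : T) F (ext S x).
Proof.
rewrite pair_big /= (reindex (fun p : {ffun 'I_t.+1 -> T} * T => ext p.1 p.2)) //.
exists (@unext t) => [[S x] _ | S2 _].
- rewrite /unext /ext; congr pair.
    apply/ffunP => j; rewrite !ffunE inordK ?ltn_ord //; last first.
      by have := ltn_ord j; lia.
    by rewrite inord_val.
  by rewrite ffunE /= ltnn.
- rewrite /unext /ext /=; apply/ffunP => j; rewrite ffunE.
  case: ifP => jt.
    have := ffunE (fun j0 : 'I_t.+1 => S2 (inord j0)) (inord j). move=> /= ->.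
    by rewrite inordK // inord_val.
  congr (S2 _); apply: val_inj => /=; have := ltn_ord j; lia.
Qed.

Lemma inord_big t j : (t < j)%N -> (inord j : 'I_t.+1) = inord 0.
Proof.
move=> tj; apply: val_inj; rewrite /= /inord !val_insubd /=.
have -> : (j < t.+1)%N = false by lia.
by [].
Qed.

Lemma sf_ext t (S : {ffun 'I_t.+1 -> T}) x : sf (ext S x) = upd (sf S) t.+1 x.
Proof.
apply/funext => j; rewrite /sf /upd ffunE.
case: (ltngtP j t.+1) => jt.
- by rewrite inordK ?jt //; lia.
- rewrite (inord_big (t:=t.+1)) // inordK //= (inord_big (t:=t)) //; lia.
- by rewrite jt inordK // ltnn.
Qed.

Lemma Ex_step pi t G : Ex pi t.+1 G =
  Ex pi t (fun s => \sum_(x : T) trans C pi (upd s t.+1 x) t * G (upd s t.+1 x)).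
Proof.
rewrite /Ex sum_ffunS; apply: eq_bigr => S _; rewrite mulr_sumr; apply: eq_bigr => x _.
rewrite sf_ext w_S (@w_ext pi t (upd (sf S) t.+1 x) (sf S)); first by rewrite mulrA.
by move=> j jt; rewrite /upd ltn_eqF // ltnS.
Qed.

Lemma Ex_le pi t G H : (forall s, w pi t s != 0 -> G s <= H s) -> Ex pi t G <= Ex pi t H.
Proof.
move=> le; apply: ler_sum => S _.
have [->|nz] := eqVneq (w pi t (sf S)) 0; first by rewrite !mul0r.
by apply: ler_wpM2l; [exact: w_ge0 | exact: le].
Qed.

Lemma Ex_ge0 pi t G : (forall s, 0 <= G s) -> 0 <= Ex pi t G.
Proof. by move=> g; apply: sumr_ge0 => S _; apply: mulr_ge0 => //; exact: w_ge0. Qed.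

Lemma Ex_B pi t G H : Ex pi t (fun s => G s - H s) = Ex pi t G - Ex pi t H.
Proof. by rewrite /Ex -sumrB; apply: eq_bigr => S _; rewrite mulrBr. Qed.

Lemma Ex_sum pi t (I : finType) (F : I -> (nat -> T) -> R) :
  Ex pi t (fun s => \sum_i F i s) = \sum_i Ex pi t (F i).
Proof.
rewrite /Ex exchange_big /=; apply: eq_bigr => S _; by rewrite mulr_sumr.
Qed.

Lemma Ex_scale pi t c G : Ex pi t (fun s => c * G s) = c * Ex pi t G.
Proof. rewrite /Ex mulr_sumr; apply: eq_bigr => S _; by rewrite mulrCA. Qed.

End Basic.

End P1.
Import P1.

Module P2.
Local Open Scope ring_scope.
Set Implicit Arguments. Unset Strict Implicit. Unset Printing Implicit Defensive.

Section Trans.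
Variables (R : realType) (d : nat) (C : config R d).
Local Notation T := {set 'I_d}.
Implicit Types (i : 'I_d) (pi : nat -> 'I_d).

Definition Qk pi (s : nat -> T) k : R :=
  (Phi C (pi k) (rcons (hist pi s (pi k) k) (s k :&: preds (pi k))) -
   Phi C (pi k) (hist pi s (pi k) k)) / (1 - Phi C (pi k) (hist pi s (pi k) k)).

Lemma trans_upd pi s k x : trans C pi (upd s k.+1 x) k =
  if pi k \in s k then (if x == s k then 1 else 0)
  else (if x == s k :|: [set pi k] then Qk pi s k
        else if x == s k then 1 - Qk pi s k else 0).
Proof.
have e1 : upd s k.+1 x k = s k by rewrite /upd ltn_eqF.
have e2 : upd s k.+1 x k.+1 = x by rewrite /upd eqxx.
rewrite /trans e1 e2 /Qk (@hist_ext _ pi (upd s k.+1 x) s) //.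
by move=> j jk; rewrite /upd ltn_eqF //; lia.
Qed.

Lemma setU1_neq (X : T) a : a \notin X -> X :|: [set a] != X.
Proof.
move=> aX; apply/eqP => e; move: aX; rewrite -e; by rewrite finset.in_setU finset.in_set1 eqxx orbT.
Qed.

Lemma trans_sum1 pi s k : \sum_(x : T) trans C pi (upd s k.+1 x) k = 1.
Proof.
under eq_bigr => x _ do rewrite (trans_upd pi s k x).
have [ak|ak] := boolP (pi k \in s k).
  rewrite (bigD1 (s k)) //= eqxx big1 ?addr0 // => x /negbTE -> //.
rewrite (bigD1 (s k :|: [set pi k])) //= eqxx.
rewrite (bigD1 (s k)) /=; last by rewrite eq_sym setU1_neq.
rewrite eqxx ifN; last by rewrite eq_sym setU1_neq.
rewrite big1 ?addr0; first by rewrite addrCA subrr addr0.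
by move=> x /andP[/negbTE -> /negbTE ->].
Qed.

Lemma trans_supp pi s k : trans C pi s k != 0 ->
  s k.+1 = s k \/ s k.+1 = s k :|: [set pi k].
Proof.
rewrite /trans; case: ifP => _.
  by have [->|] := eqVneq (s k.+1) (s k); [left | rewrite eqxx].
have [->|] := eqVneq (s k.+1) (s k :|: [set pi k]); first by right.
by have [->|] := eqVneq (s k.+1) (s k); [left | rewrite eqxx].
Qed.

Lemma trans_upd_supp pi s k x : trans C pi (upd s k.+1 x) k != 0 ->
  x = s k \/ x = s k :|: [set pi k].
Proof.
move/trans_supp; by rewrite /upd eqxx ltn_eqF.
Qed.

Lemma supp_inv pi i k s : w C pi k s != 0 -> i \notin s k ->
  Phi C i (hist pi s i k) < 1.
Proof.
elim: k => [|k IH].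
  by move=> _ _; rewrite /hist /= ltr01.
rewrite w_S mulf_eq0 negb_or => /andP[wk tk] ik1.
have [e|e] := trans_supp tk.
- have ik : i \notin s k by rewrite -e.
  have IHk := IH wk ik.
  rewrite hist_S; case: eqP => [pki|]; last by [].
  move: tk; rewrite /trans -pki in ik *.
  rewrite (negbTE ik) e eqxx ifN; last by rewrite eq_sym setU1_neq.
  set P := Phi C _ (hist pi s (pi k) k).
  set P' := Phi C _ (rcons _ _).
  have P1 : P < 1 by rewrite /P pki.
  have P'1 : P' <= 1 by apply: Phi_le1; rewrite valid_rcons valid_hist subsetIr.
  move=> nz; rewrite lt_neqAle P'1 andbT; apply/eqP => P'e.
  move: nz; rewrite P'e.
  have ne : 1 - P != 0 by rewrite subr_eq0 eq_sym lt_eqF.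
  by rewrite (_ : 1 - (1 - P) / (1 - P) = 0) ?eqxx // divff // subrr.
- move: ik1; rewrite e finset.in_setU finset.in_set1 negb_or => /andP[ik pik].
  rewrite hist_S eq_sym (negbTE pik); exact: IH.
Qed.

Lemma Ex_one pi t : Ex C pi t (fun _ => 1) = 1.
Proof.
elim: t => [|t IH].
  rewrite /Ex (bigD1 [ffun _ => finset.set0]) //= big1.
    by rewrite /w /sf ffunE eqxx big_ord0 !mulr1 addr0.
  move=> S nS; rewrite /w /sf.
  case: eqP => [e|]; last by rewrite !mul0r.
  case/eqP: nS; apply/ffunP => j; rewrite ffunE -e.
  by congr (S _); apply: val_inj; rewrite /= inordK //; case: j => [[]].
rewrite Ex_step -{2}IH; congr (Ex _ _ _ _); apply/funext => s.
by under eq_bigr do rewrite mulr1; rewrite trans_sum1.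
Qed.

End Trans.

End P2.
Import P2.

Module P3.
Local Open Scope ring_scope.
Set Implicit Arguments. Unset Strict Implicit. Unset Printing Implicit Defensive.

Section Arith.
Variables (R : realType).

Lemma sum_div (f : nat -> R) (d M : nat) : (0 < d)%N ->
  \sum_(0 <= m < d * M) f (m %/ d)%N = d%:R * \sum_(0 <= n < M) f n.
Proof.
move=> d0; elim: M => [|M IH]; first by rewrite muln0 !big_geq ?mulr0.
rewrite mulnSr (big_cat_nat (n := d * M)) ?leq_addr //= IH.
rewrite big_nat_recr //= mulrDr; congr (_ + _).
rewrite (eq_big_nat _ _ (F2 := fun _ => f M)); last first.
  move=> m /andP[m1 m2].
  have -> : m = (M * d + (m - M * d))%N by rewrite mulnC in m1 *; lia.
  rewrite divnMDl // divn_small ?addn0 //; rewrite mulnC in m1 m2 *; lia.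
by rewrite sumr_const_nat addnC addnK mulr_natl.
Qed.

Lemma sum_widen (f : nat -> R) (a b : nat) : (a <= b)%N -> (forall m, 0 <= f m) ->
  \sum_(0 <= m < a) f m <= \sum_(0 <= m < b) f m.
Proof.
move=> ab f0; rewrite (big_cat_nat (leq0n a) ab) /= lerDl.
by apply: sumr_ge0 => m _.
Qed.

Lemma sum_shift (f : nat -> R) (k N : nat) : (forall m, 0 <= f m) ->
  \sum_(k <= j < N) f (j - k)%N <= \sum_(0 <= j < N) f j.
Proof.
move=> f0; have := big_addn 0 N k xpredT (fun j => f (j - k)%N).
rewrite add0n => ->.
under eq_bigr do rewrite addnK.
apply: sum_widen => //; exact: leq_subr.
Qed.

End Arith.

Section Pot.
Variables (R : realType) (d : nat) (C : config R d) (pi : nat -> 'I_d) (N : nat).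
Hypothesis d0 : (0 < d)%N.
Hypothesis rr : forall (i : 'I_d) k,
  (0 < count (fun l => pi l == i) (index_iota k (k + d)))%N.
Local Notation T := {set 'I_d}.
Implicit Types (i : 'I_d).

Definition nk i k j := count (fun l => pi l == i) (index_iota k j).
Definition B i : R := d%:R * \sum_(n < N) pfund C i n.
Definition G i h k : R :=
  \sum_(k <= j < N) (1 - Phi C i (h ++ nseq (nk i k j) (preds i))).
Definition Pot i k (s : nat -> T) : R :=
  if i \in s k then 0 else
  (if preds i \subset s k then G i (hist pi s i k) k else B i) /
  (1 - Phi C i (hist pi s i k)).
Definition cc i k (s : nat -> T) : R :=
  if (preds i \subset s k) && (i \notin s k) then 1 else 0.

Lemma pfund_ge0 i n : 0 <= pfund C i n.
Proof. by rewrite /pfund subr_ge0 Phi_le1 // valid_nseq. Qed.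

Lemma pfund_dec i m n : (m <= n)%N -> pfund C i n <= pfund C i m.
Proof.
move=> mn; rewrite /pfund lerD2l lerN2; apply: Phi_mono; rewrite ?valid_nseq //.
by rewrite -(subnKC mn) nseqD prefix_subseq.
Qed.

Lemma term_le i h n : valid i h ->
  1 - Phi C i (h ++ nseq n (preds i)) <= pfund C i n.
Proof.
move=> vh; rewrite /pfund lerD2l lerN2; apply: Phi_mono.
- by rewrite valid_cat vh valid_nseq.
- exact: valid_nseq.
- exact: suffix_subseq.
Qed.

Lemma term_ge0 i h n : valid i h -> 0 <= 1 - Phi C i (h ++ nseq n (preds i)).
Proof. by move=> vh; rewrite subr_ge0 Phi_le1 // valid_cat vh valid_nseq. Qed.

Lemma B_ge0 i : 0 <= B i.
Proof. by apply: mulr_ge0 => //; apply: sumr_ge0 => n _; exact: pfund_ge0. Qed.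

Lemma index_iota_cat m n p : (m <= n <= p)%N ->
  index_iota m p = index_iota m n ++ index_iota n p.
Proof.
move=> /andP[mn np]; rewrite /index_iota.
rewrite (_ : (p - m = (n - m) + (p - n))%N); last by lia.
rewrite iotaD; congr (_ ++ iota _ _); lia.
Qed.

Lemma index_iota_S k j : (k < j)%N -> index_iota k j = k :: index_iota k.+1 j.
Proof. by move=> kj; rewrite /index_iota -(subnSK kj). Qed.

Lemma nk_nil i k : nk i k k = 0%N.
Proof. by rewrite /nk /index_iota subnn. Qed.

Lemma nk_S i k j : (k < j)%N -> nk i k j = ((pi k == i) + nk i k.+1 j)%N.
Proof. by move=> kj; rewrite /nk index_iota_S. Qed.

Lemma nk_mul i k q : (q <= nk i k (k + q * d))%N.
Proof.
elim: q => [|q IH]; first by [].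
rewrite /nk (index_iota_cat (n := k + q * d)); last by rewrite mulSn; lia.
rewrite count_cat.
have := rr i (k + q * d); rewrite mulSn (addnC d) addnA.
rewrite /nk in IH; lia.
Qed.

Lemma nk_lb i k j : (k <= j)%N -> ((j - k) %/ d <= nk i k j)%N.
Proof.
move=> kj; set q := ((j - k) %/ d)%N.
have qj : (k + q * d <= j)%N by have := leq_trunc_div (j - k) d; rewrite -/q; lia.
apply: (leq_trans (nk_mul i k q)).
rewrite /nk (index_iota_cat (m := k) (n := k + q * d) (p := j)); last by lia.
by rewrite count_cat leq_addr.
Qed.

Lemma G_ge0 i h k : valid i h -> 0 <= G i h k.
Proof. by move=> vh; apply: sumr_ge0 => j _; exact: term_ge0. Qed.

Lemma G_ge i h k : valid i h -> (k < N)%N -> 1 - Phi C i h <= G i h k.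
Proof.
move=> vh kN; rewrite /G big_ltn // nk_nil cats0 lerDl.
by apply: sumr_ge0 => j _; exact: term_ge0.
Qed.

Lemma G_step i h k : (k < N)%N ->
  G i (if pi k == i then rcons h (preds i) else h) k.+1 = G i h k - (1 - Phi C i h).
Proof.
move=> kN; rewrite [G i h k]/G big_ltn // nk_nil cats0.
set t := (1 - Phi C i h); rewrite (addrC t) addrK.
apply: eq_big_nat => j /andP[kj jN]; rewrite (nk_S i kj).
by case: eqP => _ //=; rewrite cat_rcons.
Qed.

Lemma G_le_B i h k : valid i h -> G i h k <= B i.
Proof.
move=> vh; rewrite /B -(big_mkord xpredT).
apply: (le_trans (y := \sum_(k <= j < N) pfund C i ((j - k) %/ d)%N)).
  apply: ler_sum_nat => j /andP[kj _].
  apply: (le_trans (term_le _ vh)); apply: pfund_dec; exact: nk_lb.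
apply: (le_trans (@sum_shift R (fun m => pfund C i (m %/ d)%N) k N _)).
  by move=> m; exact: pfund_ge0.
rewrite -sum_div //; apply: sum_widen; last by move=> m; exact: pfund_ge0.
by rewrite leq_pmull.
Qed.

End Pot.

End P3.
Import P3.

Module P4.
Local Open Scope ring_scope.
Set Implicit Arguments. Unset Strict Implicit. Unset Printing Implicit Defensive.

Section Step.
Variables (R : realType) (d : nat) (C : config R d) (pi : nat -> 'I_d) (N : nat).
Hypothesis d0 : (0 < d)%N.
Hypothesis rr : forall (i : 'I_d) k,
  (0 < count (fun l => pi l == i) (index_iota k (k + d)))%N.
Local Notation T := {set 'I_d}.
Implicit Types (i : 'I_d) (s : nat -> {set 'I_d}).

Local Notation G := (G C pi N).
Local Notation B := (B C N).
Local Notation Pot := (Pot C pi N).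
Local Notation cc := (@cc R d).

Lemma hist_upd i s k x : hist pi (upd s k.+1 x) i k.+1 =
  if pi k == i then rcons (hist pi s i k) (s k :&: preds i) else hist pi s i k.
Proof.
rewrite hist_S (@hist_ext _ pi (upd s k.+1 x) s); last first.
  by move=> j jk; rewrite /upd ltn_eqF //; lia.
by rewrite /upd ltn_eqF.
Qed.

Lemma Pot_upd i s k x : Pot i k.+1 (upd s k.+1 x) =
  let h' := if pi k == i then rcons (hist pi s i k) (s k :&: preds i) else hist pi s i k in
  if i \in x then 0 else
  (if preds i \subset x then G i h' k.+1 else B i) / (1 - Phi C i h').
Proof. by rewrite /P3.Pot hist_upd {1 2}/upd eqxx. Qed.

Lemma Pot_ge0 i k s : 0 <= Pot i k s.
Proof.
rewrite /P3.Pot; case: ifP => // _; apply: divr_ge0.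
  case: ifP => _; [exact: G_ge0 (valid_hist _ _ _ _) | exact: B_ge0].
by rewrite subr_ge0 Phi_le1 // valid_hist.
Qed.

Lemma Pot_open i k s : i \in s k -> Pot i k s = 0.
Proof. by rewrite /P3.Pot => ->. Qed.

Lemma Pot_closed i k s : i \notin s k -> Pot i k s =
  (if preds i \subset s k then G i (hist pi s i k) k else B i) /
  (1 - Phi C i (hist pi s i k)).
Proof. by rewrite /P3.Pot => /negbTE ->. Qed.

Lemma cc_open i k s : i \in s k -> cc i k s = 0.
Proof. by rewrite /P3.cc => ->; rewrite andbF. Qed.

Lemma cc_closed i k s : i \notin s k -> cc i k s = if preds i \subset s k then 1 else 0.
Proof. by rewrite /P3.cc => ->; rewrite andbT. Qed.

Lemma avg s k (f : T -> R) M :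
  (forall x, trans C pi (upd s k.+1 x) k != 0 -> f x <= M) ->
  \sum_(x : T) trans C pi (upd s k.+1 x) k * f x <= M.
Proof.
move=> hf.
apply: (le_trans (y := \sum_(x : T) trans C pi (upd s k.+1 x) k * M)).
  apply: ler_sum => x _.
  have [->|nz] := eqVneq (trans C pi (upd s k.+1 x) k) 0; first by rewrite !mul0r.
  by apply: ler_wpM2l; [exact: trans_ge0 | exact: hf].
by rewrite -mulr_suml trans_sum1 mul1r.
Qed.

Lemma pot_step i k s : (k < N)%N -> w C pi k s != 0 ->
  \sum_(x : T) trans C pi (upd s k.+1 x) k * Pot i k.+1 (upd s k.+1 x)
  <= Pot i k s - cc i k s.
Proof.
move=> kN wk.
have vh := valid_hist pi s i k.
have [iS|iS] := boolP (i \in s k).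
  rewrite Pot_open // cc_open // subrr.
  apply: avg => x /trans_upd_supp [->|->]; rewrite Pot_upd /= ?iS //.
  by rewrite finset.in_setU iS.
have P1 := supp_inv wk iS.
set h := hist pi s i k in vh P1 *.
set P := Phi C i h in P1 *.
have nP : 1 - P != 0 by rewrite subr_eq0 eq_sym lt_eqF.
have pP : 0 < 1 - P by rewrite subr_gt0.
have [pki|pki] := eqVneq (pi k) i.
-
  rewrite (bigD1 (s k)) //= big1 ?addr0; last first.
    move=> x xs.
    have [->|nz] := eqVneq (trans C pi (upd s k.+1 x) k) 0; first by rewrite mul0r.
    case: (trans_upd_supp nz) => ex; first by rewrite ex eqxx in xs.
    by rewrite Pot_upd /= ex finset.in_setU finset.in_set1 pki eqxx orbT mulr0.
  rewrite trans_upd Pot_upd /= pki eqxx (negbTE iS) ifN; last first.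
    by rewrite eq_sym setU1_neq.
  rewrite eqxx /Qk pki -/h -/P.
  set y := s k :&: preds i.
  have vh' : valid i (rcons h y) by rewrite valid_rcons vh subsetIr.
  set P' := Phi C i (rcons h y).
  have P'1 : P' <= 1 by exact: Phi_le1.
  have -> : 1 - (P' - P) / (1 - P) = (1 - P') / (1 - P) by field; rewrite nP.
  rewrite Pot_closed // cc_closed // -/h -/P.
  have [e|ne] := eqVneq P' 1.
    rewrite e subrr mul0r mul0r.
    case: ifP => L.
      by rewrite subr_ge0 ler_pdivlMr // mul1r (G_ge C pi vh kN).
    by rewrite subr0; apply: divr_ge0; [exact: B_ge0 | exact: ltW].
  have nP' : 1 - P' != 0 by rewrite subr_eq0 eq_sym.
  case: ifP => L.
    have -> : y = preds i by rewrite /y; apply/finset.setIidPr.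
    have := G_step C pi i h kN; rewrite pki eqxx => ->.
    by rewrite le_eqVlt; apply/orP; left; apply/eqP; rewrite -/P; field; rewrite ?nP ?nP'.
  by rewrite subr0 le_eqVlt; apply/orP; left; apply/eqP; rewrite -/P; field; rewrite ?nP ?nP'.
-
  apply: avg => x /trans_upd_supp ex.
  have ix : i \notin x.
    case: ex => ->; rewrite ?finset.in_setU ?finset.in_set1 // negb_or iS /=.
    by rewrite eq_sym.
  rewrite Pot_upd /= (negbTE ix) (negbTE pki) -/h -/P.
  rewrite Pot_closed // cc_closed // -/h -/P.
  have [L|L] := boolP (preds i \subset s k).
    have Lx : preds i \subset x.
      case: ex => ->; first by [].
      exact: (fintype.subset_trans L (finset.subsetUl _ _)).
    rewrite Lx.
    have := G_step C pi i h kN; rewrite (negbTE pki) => ->.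
    by rewrite le_eqVlt; apply/orP; left; apply/eqP; rewrite -/P; field; rewrite ?nP ?nP'.
  rewrite subr0; apply: ler_wpM2r; first by rewrite invr_ge0 ltW.
  by case: ifP => _ //; exact: (G_le_B C N d0 rr _ vh).
Qed.

End Step.

End P4.
Import P4.

Module P5.
Local Open Scope ring_scope.
Set Implicit Arguments. Unset Strict Implicit. Unset Printing Implicit Defensive.

Section Total.
Variables (R : realType) (d : nat) (C : config R d) (pi : nat -> 'I_d) (N : nat).
Hypothesis d0 : (0 < d)%N.
Hypothesis rr : forall (i : 'I_d) k,
  (0 < count (fun l => pi l == i) (index_iota k (k + d)))%N.
Local Notation T := {set 'I_d}.
Implicit Types (i : 'I_d) (s : nat -> {set 'I_d}).

Local Notation G := (G C pi N).
Local Notation B := (B C N).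
Local Notation Pot := (Pot C pi N).
Local Notation cc := (@cc R d).

Lemma accum i M : (M <= N)%N ->
  Ex C pi M (Pot i M) + \sum_(j < M) Ex C pi j (cc i j) <= Ex C pi 0 (Pot i 0).
Proof.
elim: M => [|M IH] MN; first by rewrite big_ord0 addr0.
have IH' := IH (ltnW MN).
have h1 : Ex C pi M.+1 (Pot i M.+1) <= Ex C pi M (Pot i M) - Ex C pi M (cc i M).
  rewrite Ex_step -Ex_B; apply: Ex_le => s ws.
  exact: (pot_step d0 rr).
rewrite big_ord_recr /=; lra.
Qed.

Lemma Ex0_le i : Ex C pi 0 (Pot i 0) <= B i.
Proof.
rewrite -[B i]mulr1 -(Ex_one C pi 0) -Ex_scale.
apply: Ex_le => s ws.
have s0 : s 0%N = finset.set0.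
  by move: ws; rewrite /w; case: (s 0%N =P finset.set0) => // _; rewrite mul0r eqxx.
rewrite mulr1 Pot_closed ?s0 ?finset.in_set0 //.
rewrite (_ : hist pi s i 0 = [::]) // /Phi subr0 divr1.
by case: ifP => _ //; exact: (G_le_B C N d0 rr _ (valid_hist pi s i 0)).
Qed.

Lemma door_bound i : \sum_(j < N) Ex C pi j (cc i j) <= B i.
Proof.
have h1 := accum i (leqnn N).
have h2 := Ex0_le i.
have h3 : 0 <= Ex C pi N (Pot i N) by apply: Ex_ge0 => s; exact: Pot_ge0.
lra.
Qed.

Lemma cc_ge0 i k s : 0 <= cc i k s.
Proof. by rewrite /P3.cc; case: ifP. Qed.

Lemma cc_sum_ge1 j s : s j != [set: 'I_d] -> 1 <= \sum_i cc i j s.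
Proof.
move=> nT.
have : ~~ ([set: 'I_d] \subset s j) by rewrite finset.subTset.
case/subsetPn => i0 _ hi0.
case: (arg_minnP (P := fun i => i \notin s j) (fun i : 'I_d => val i) hi0) => i hi hmin.
rewrite (bigD1 i) //= cc_closed //.
have -> : preds i \subset s j.
  apply/fintype.subsetP => l; rewrite /preds inE => li; apply/negPn/negP => hl.
  by move: (hmin l hl) => /=; rewrite leqNgt li.
rewrite -[X in X <= _]addr0 lerD2l; apply: sumr_ge0 => l _; exact: cc_ge0.
Qed.

Lemma tail_le j : tail_prob C pi j <= \sum_i Ex C pi j (cc i j).
Proof.
rewrite /tail_prob -Ex_sum /Ex big_mkcond /=.
apply: ler_sum => S _; rewrite path_probE.
have e : sf S j = S ord_max.
  by rewrite /sf; congr (S _); apply: val_inj; rewrite /= inordK.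
case: ifP => hS.
  rewrite -{1}[w C pi j (sf S)]mulr1; apply: ler_wpM2l; first exact: w_ge0.
  by apply: cc_sum_ge1; rewrite e.
by apply: mulr_ge0; [exact: w_ge0 | apply: sumr_ge0 => i _; exact: cc_ge0].
Qed.

Lemma total_bound : \sum_(j < N) tail_prob C pi j <= \sum_i B i.
Proof.
apply: (le_trans (y := \sum_(j < N) \sum_i Ex C pi j (cc i j))).
  by apply: ler_sum => j _; exact: tail_le.
rewrite exchange_big /=; apply: ler_sum => i _; exact: door_bound.
Qed.

End Total.

End P5.
Import P5.


Theorem mainTheorem7 (R : realType) (d : nat) (hd : (2 <= d)%N) (C : config R d)
  (hE : forall i : 'I_d, (Efund C i < +oo)%E) :
  (Price C <= (d%:R)%:E)%E.
Proof.
have d0 : (0 < d)%N by lia.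
pose pi := fun k : nat => (Ordinal (ltn_pmod k d0) : 'I_d).
have rr : forall (i : 'I_d) k,
    (0 < count (fun l => pi l == i) (index_iota k (k + d)))%N.
  move=> i k; rewrite -has_count; apply/hasP.
  have hk := divn_eq k d; have hr := ltn_pmod k d0; have hi := ltn_ord i.
  move: hk hr; set q := (k %/ d)%N; set r := (k %% d)%N => hk hr.
  case: (leqP r i) => ri.
  - exists (q * d + i)%N; first by rewrite mem_index_iota; lia.
    by apply/eqP/val_inj => /=; rewrite modnMDl modn_small.
  - exists (q.+1 * d + i)%N; first by rewrite mem_index_iota mulSn; lia.
    by apply/eqP/val_inj => /=; rewrite modnMDl modn_small.
have pf0 : forall i n, (0 <= (pfund C i n)%:E)%E.
  by move=> i n; rewrite lee_fin; exact: pfund_ge0.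
have Efin : forall i, Efund C i = (fine (Efund C i))%:E.
  move=> i; rewrite fineK // fin_numE; apply/andP; split.
    have h0 : (0 <= Efund C i)%E := nneseries_ge0 (fun n _ _ => pf0 i n).
    by rewrite gt_eqF // (lt_le_trans _ h0) // ltNyr.
  by rewrite lt_eqF // hE.
have Pge : forall i n, \sum_(k < n) pfund C i k <= fine (Efund C i).
  move=> i n; rewrite -lee_fin -Efin -sumEFin.
  have := nneseries_lim_ge (u_ := fun k => (pfund C i k)%:E) (P := xpredT) (m := 0%N) n
    (fun k _ _ => pf0 i k).
  by rewrite big_mkord.
set F := \sum_(i < d) fine (Efund C i).
have SumEe : SumE C = F%:E.
  by rewrite /SumE (eq_bigr _ (fun i _ => Efin i)) sumEFin.
have Fpos : 0 < F.
  apply: (lt_le_trans (y := \sum_(i < d) (1 : R))).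
    by rewrite sumr_const card_ord ltr0n.
  apply: ler_sum => i _; apply: le_trans (Pge i 1%N).
  by rewrite big_ord1 /pfund /Phi subr0.
have tail0 : forall t, 0 <= tail_prob C pi t.
  by move=> t; apply: sumr_ge0 => S _; rewrite path_probE; exact: w_ge0.
have Tle : (Tpi C pi <= (d%:R * F)%:E)%E.
  apply: lime_le.
    by apply: is_cvg_ereal_nneg_natsum => n _; rewrite lee_fin.
  apply: nearW => N; rewrite sumEFin lee_fin big_mkord.
  apply: (le_trans (total_bound C N d0 rr)).
  rewrite /B -mulr_sumr; apply: ler_wpM2l => //; apply: ler_sum => i _; exact: Pge.
rewrite /Price SumEe /=.
apply: (le_trans (y := ((d%:R * F)%:E * (F^-1)%:E)%E)).
  apply: lee_wpmul2r; first by rewrite lee_fin invr_ge0 ltW.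
  apply: le_trans Tle; apply: ereal_inf_lbound; by exists pi.
by rewrite -EFinM -mulrA divff ?mulr1 // gt_eqF.
Qed.
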